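(* For every $\varepsilon>0$ there exist constants $b>1$, $c\in(0,2\sqrt b)$, $C>0$ with $C<(\pi+\varepsilon)\,c\sqrt b$, and a function $a\in L^\infty(\mathbb{R}^+)$ with $0\le a(t)\le C$ for almost every $t\ge 0$, such that the equation $$u''(t)+c\,u'(t)+\big(b+a(t)\big)u(t)=0\quad\text{for a.e. } t\ge 0$$ has a solution $u\in W^{2,\infty}_{\mathrm{loc}}(\mathbb{R}^+)$ which is unbounded on $\mathbb{R}^+=[0,\infty)$. *)

(* Defs.v *)
From Stdlib Require Import Reals.
Open Scope R_scope.

(* Outer (Lebesgue) measure of E is at most eps: E is covered by countably
   many open intervals (lo n, hi n) of total length <= eps. *)
Definition outer_le (E : R -> Prop) (eps : R) : Prop :=
  exists lo hi : nat -> R,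
    (forall n, lo n <= hi n) /\
    (forall x, E x -> exists n, lo n < x < hi n) /\
    (forall N, sum_f_R0 (fun n => hi n - lo n) N <= eps).

Definition null_set (E : R -> Prop) : Prop :=
  forall eps, 0 < eps -> outer_le E eps.

Definition open_set (O : R -> Prop) : Prop :=
  forall x, O x -> exists d, 0 < d /\ forall y, Rabs (y - x) < d -> O y.

(* Lebesgue measurability (outer regularity characterization) *)
Definition leb_measurable (E : R -> Prop) : Prop :=
  forall eps, 0 < eps -> exists O, open_set O /\ (forall x, E x -> O x) /\
    outer_le (fun x => O x /\ ~ E x) eps.

Definition measurable_on_Rplus (a : R -> R) : Prop :=
  forall r, leb_measurable (fun t => 0 <= t /\ r < a t).

Definition ae_Rplus (P : R -> Prop) : Prop :=
  null_set (fun t => 0 <= t /\ ~ P t).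

(* u in W^{2,oo}_loc(R^+): u is C^1 with derivative du, and du is Lipschitz
   on every compact [0,T] (1D characterization of W^{2,oo}_loc). *)
Definition W2inf_loc (u du : R -> R) : Prop :=
  (forall t, 0 <= t -> derivable_pt_lim u t (du t)) /\
  (forall T, 0 <= T -> exists L, forall s t, 0 <= s <= T -> 0 <= t <= T ->
      Rabs (du s - du t) <= L * Rabs (s - t)).

(* Main.v *)
From Stdlib Require Import Reals Lra Lia ZArith.
From Coquelicot Require Import Coquelicot.
Require Import Defs.
Open Scope R_scope.

Definition G (c K t0 y : R) := exp (-(c/2)*y) * K * sin (y - t0).
Definition dG (c K t0 y : R) := exp (-(c/2)*y) * K * (cos (y - t0) - c/2 * sin (y - t0)).
Definition Hf (c Om K t0 y : R) := exp (-(c/2)*y) * K * cos (Om*(y - t0)).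
Definition dHf (c Om K t0 y : R) :=
  exp (-(c/2)*y) * K * (- Om * sin (Om*(y - t0)) - c/2 * cos (Om*(y - t0))).

Lemma G_der c K t0 y : derivable_pt_lim (G c K t0) y (dG c K t0 y).
Proof.
  apply is_derive_Reals. unfold G, dG, Rminus. auto_derive; auto. field.
Qed.

Lemma dG_der c K t0 y :
  derivable_pt_lim (dG c K t0) y (- c * dG c K t0 y - (1 + c^2/4) * G c K t0 y).
Proof.
  apply is_derive_Reals. unfold G, dG, Rminus. auto_derive; auto. field.
Qed.

Lemma H_der c Om K t0 y : derivable_pt_lim (Hf c Om K t0) y (dHf c Om K t0 y).
Proof.
  apply is_derive_Reals. unfold Hf, dHf, Rminus. auto_derive; auto. field.
Qed.

Lemma dH_der c Om K t0 y :
  derivable_pt_lim (dHf c Om K t0) y (- c * dHf c Om K t0 y - (Om^2 + c^2/4) * Hf c Om K t0 y).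
Proof.
  apply is_derive_Reals. unfold Hf, dHf, Rminus. auto_derive; auto. field.
Qed.
Definition Tp (Om : R) := PI/2 + PI/(2*Om).
Definition Nf (Om t : R) : nat := Z.to_nat (up (t / Tp Om) - 1).

Lemma Tp_gt Om : 0 < Om -> PI/2 < Tp Om.
Proof.
  intros. unfold Tp. assert (0 < PI/(2*Om)). { apply Rdiv_lt_0_compat. apply PI_RGT_0. lra. } lra.
Qed.

Lemma PI2_pos : 0 < PI/2.
Proof. generalize PI_RGT_0; lra. Qed.

Lemma Nf_piece Om n y : 0 < Om -> INR n * Tp Om <= y < (INR n + 1) * Tp Om -> Nf Om y = n.
Proof.
  intros HO [H1 H2]. assert (HT : 0 < Tp Om) by (generalize (Tp_gt Om HO) PI2_pos; lra).
  unfold Nf.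
  assert (E : (Z.of_nat n + 1)%Z = up (y / Tp Om)).
  { apply tech_up; rewrite plus_IZR, <- INR_IZR_INZ.
    - apply Rmult_lt_reg_r with (Tp Om); auto. unfold Rdiv. rewrite Rmult_assoc, Rinv_l; lra.
    - cut (INR n <= y / Tp Om). lra.
      apply Rmult_le_reg_r with (Tp Om); auto. unfold Rdiv. rewrite Rmult_assoc, Rinv_l; lra. }
  rewrite <- E. replace (Z.of_nat n + 1 - 1)%Z with (Z.of_nat n) by lia. apply Nat2Z.id.
Qed.

Lemma Nf_small Om y : 0 < Om -> y < Tp Om -> Nf Om y = 0%nat.
Proof.
  intros HO Hf. assert (HT : 0 < Tp Om) by (generalize (Tp_gt Om HO) PI2_pos; lra).
  unfold Nf. destruct (archimed (y / Tp Om)) as [A1 A2].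
  assert (y / Tp Om < 1).
  { apply Rmult_lt_reg_r with (Tp Om); auto. unfold Rdiv. rewrite Rmult_assoc, Rinv_l; lra. }
  assert (IZR (up (y / Tp Om)) < 2) by lra.
  assert (up (y / Tp Om) < 2)%Z by (apply lt_IZR; auto).
  lia.
Qed.

Lemma Nf_loc Om t : 0 < Om -> 0 <= t ->
  INR (Nf Om t) * Tp Om <= t < (INR (Nf Om t) + 1) * Tp Om.
Proof.
  intros HO Ht. assert (HT : 0 < Tp Om) by (generalize (Tp_gt Om HO) PI2_pos; lra).
  destruct (archimed (t / Tp Om)) as [A1 A2].
  assert (0 <= t / Tp Om) by (unfold Rdiv; apply Rmult_le_pos; [lra| left; apply Rinv_0_lt_compat; lra]).
  assert (0 < up (t / Tp Om))%Z by (apply lt_IZR; lra).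
  assert (E : INR (Nf Om t) = IZR (up (t / Tp Om)) - 1).
  { unfold Nf. rewrite INR_IZR_INZ, Z2Nat.id by lia. rewrite minus_IZR. reflexivity. }
  rewrite E. split.
  - apply Rmult_le_reg_r with (/ Tp Om). apply Rinv_0_lt_compat; auto.
    rewrite Rmult_assoc, Rinv_r by lra. fold (t / Tp Om). lra.
  - apply Rmult_lt_reg_r with (/ Tp Om). apply Rinv_0_lt_compat; auto.
    rewrite Rmult_assoc, Rinv_r by lra. fold (t / Tp Om). lra.
Qed.

Definition sf Om t := t - INR (Nf Om t) * Tp Om.
Definition ff Om s := if Rle_dec s (PI/2) then sin s else cos (Om*(s - PI/2)).
Definition dff Om s := if Rle_dec s (PI/2) then cos s else - Om * sin (Om*(s - PI/2)).
Definition uu c Om t := exp (-(c/2)*t) * (-Om)^(Nf Om t) * ff Om (sf Om t).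
Definition duu c Om t :=
  exp (-(c/2)*t) * (-Om)^(Nf Om t) * (dff Om (sf Om t) - c/2 * ff Om (sf Om t)).
Definition aa C Om t := if Rle_dec (sf Om t) (PI/2) then 0 else C.

Lemma P0 c Om y : 0 < Om -> y <= 0 ->
  uu c Om y = G c 1 (INR 0 * Tp Om) y /\ duu c Om y = dG c 1 (INR 0 * Tp Om) y.
Proof.
  intros HO Hy. assert (HT := Tp_gt Om HO). assert (HP := PI2_pos).
  assert (HN : Nf Om y = 0%nat) by (apply Nf_small; lra).
  unfold uu, duu, G, dG, sf, ff, dff. rewrite HN. simpl (INR 0).
  destruct (Rle_dec (y - 0 * Tp Om) (PI/2)); [|lra].
  replace (y - 0 * Tp Om) with y by ring. simpl. split; ring.
Qed.

Lemma P1 c Om n y : 0 < Om -> INR n * Tp Om <= y <= INR n * Tp Om + PI/2 ->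
  uu c Om y = G c ((-Om)^n) (INR n * Tp Om) y /\
  duu c Om y = dG c ((-Om)^n) (INR n * Tp Om) y.
Proof.
  intros HO Hy. assert (HT := Tp_gt Om HO). assert (HP := PI2_pos).
  assert (HN : Nf Om y = n) by (apply Nf_piece; auto; lra).
  unfold uu, duu, G, dG, sf, ff, dff. rewrite HN.
  destruct (Rle_dec (y - INR n * Tp Om) (PI/2)); [|lra].
  split; ring.
Qed.

Lemma P2 c Om n y : 0 < Om -> INR n * Tp Om + PI/2 <= y <= (INR n + 1) * Tp Om ->
  uu c Om y = Hf c Om ((-Om)^n) (INR n * Tp Om + PI/2) y /\
  duu c Om y = dHf c Om ((-Om)^n) (INR n * Tp Om + PI/2) y.
Proof.
  intros HO Hy. assert (HT := Tp_gt Om HO). assert (HP := PI2_pos).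
  destruct (Rlt_or_le y ((INR n + 1) * Tp Om)) as [Hl|Hl].
  - assert (HN : Nf Om y = n) by (apply Nf_piece; auto; lra).
    unfold uu, duu, Hf, dHf, sf, ff, dff. rewrite HN.
    destruct (Rle_dec (y - INR n * Tp Om) (PI/2)).
    + assert (E : y = INR n * Tp Om + PI/2) by lra.
      rewrite E. replace (INR n * Tp Om + PI / 2 - INR n * Tp Om) with (PI/2) by ring.
      replace (Om * (INR n * Tp Om + PI / 2 - (INR n * Tp Om + PI / 2))) with 0 by ring.
      rewrite sin_PI2, cos_PI2, cos_0, sin_0. split; ring.
    + replace (y - INR n * Tp Om - PI / 2) with (y - (INR n * Tp Om + PI / 2)) by ring.
      split; ring.
  - assert (E : y = (INR n + 1) * Tp Om) by lra.
    assert (HN : Nf Om y = S n) by (apply Nf_piece; auto; rewrite S_INR; lra).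
    unfold uu, duu, Hf, dHf, sf, ff, dff. rewrite HN.
    rewrite S_INR. rewrite E.
    replace ((INR n + 1) * Tp Om - (INR n + 1) * Tp Om) with 0 by ring.
    destruct (Rle_dec 0 (PI/2)); [|lra].
    replace (Om * ((INR n + 1) * Tp Om - (INR n * Tp Om + PI / 2))) with (PI/2)
      by (unfold Tp; field; lra).
    rewrite sin_PI2, cos_PI2, cos_0, sin_0. simpl. split; ring.
Qed.

Lemma glue1 (f g1 g2 : R -> R) x l d : 0 < d ->
  (forall y, x - d <= y <= x -> f y = g1 y) ->
  (forall y, x <= y <= x + d -> f y = g2 y) ->
  derivable_pt_lim g1 x l -> derivable_pt_lim g2 x l -> derivable_pt_lim f x l.
Proof.
  intros Hd E1 E2 D1 D2 eps Heps.
  destruct (D1 eps Heps) as [d1 Hd1]. destruct (D2 eps Heps) as [d2 Hd2].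
  assert (Hm : 0 < Rmin d (Rmin d1 d2)).
  { destruct d1 as [d1 p1]; destruct d2 as [d2 p2]; simpl.
    repeat apply Rmin_glb_lt; auto. }
  exists (mkposreal _ Hm). simpl. intros h Hh Hlt.
  assert (A1 := Rmin_l d (Rmin d1 d2)). assert (A2 := Rmin_r d (Rmin d1 d2)).
  assert (A3 := Rmin_l d1 d2). assert (A4 := Rmin_r d1 d2).
  assert (Hab := Rle_abs h). assert (Hab2 := Rle_abs (-h)). rewrite Rabs_Ropp in Hab2.
  destruct (Rlt_or_le h 0) as [Hn|Hp].
  - rewrite (E1 (x+h)) by lra. rewrite (E1 x) by lra. apply Hd1; auto; lra.
  - rewrite (E2 (x+h)) by lra. rewrite (E2 x) by lra. apply Hd2; auto; lra.
Qed.

Lemma glue2 (f df g1 d1 g2 d2 : R -> R) x d : 0 < d ->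
  (forall y, x - d <= y <= x -> f y = g1 y /\ df y = d1 y) ->
  (forall y, x <= y <= x + d -> f y = g2 y /\ df y = d2 y) ->
  (forall y, derivable_pt_lim g1 y (d1 y)) -> (forall y, derivable_pt_lim g2 y (d2 y)) ->
  derivable_pt_lim f x (df x).
Proof.
  intros Hd E1 E2 D1 D2. apply glue1 with g1 g2 d; auto.
  - intros; apply E1; auto.
  - intros; apply E2; auto.
  - destruct (E1 x) as [_ ->]; [lra|]. auto.
  - destruct (E2 x) as [_ ->]; [lra|]. auto.
Qed.

Lemma left_piece c Om t : 0 < Om -> 0 <= t -> exists g d dl, 0 < dl /\
  (forall y, t - dl <= y <= t -> uu c Om y = g y /\ duu c Om y = d y) /\
  (forall y, derivable_pt_lim g y (d y)).
Proof.
  intros HO Ht. assert (HT := Tp_gt Om HO). assert (HP := PI2_pos).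
  destruct (Nf_loc Om t HO Ht) as [L1 L2]. set (n := Nf Om t) in *.
  destruct (Rlt_or_le (INR n * Tp Om + PI/2) t) as [Ha|Ha].
  - exists (Hf c Om ((-Om)^n) (INR n * Tp Om + PI/2)), (dHf c Om ((-Om)^n) (INR n * Tp Om + PI/2)).
    exists (t - (INR n * Tp Om + PI/2)). split; [lra|split].
    + intros y Hy. apply P2; auto; lra.
    + intros; apply H_der.
  - destruct (Rlt_or_le (INR n * Tp Om) t) as [Hb|Hb].
    + exists (G c ((-Om)^n) (INR n * Tp Om)), (dG c ((-Om)^n) (INR n * Tp Om)).
      exists (t - INR n * Tp Om). split; [lra|split].
      * intros y Hy. apply P1; auto; lra.
      * intros; apply G_der.
    + assert (Et : t = INR n * Tp Om) by lra.
      destruct n as [|m].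
      * exists (G c 1 (INR 0 * Tp Om)), (dG c 1 (INR 0 * Tp Om)), 1. split; [lra|split].
        -- intros y Hy. apply P0; auto. simpl in Et. lra.
        -- intros; apply G_der.
      * exists (Hf c Om ((-Om)^m) (INR m * Tp Om + PI/2)), (dHf c Om ((-Om)^m) (INR m * Tp Om + PI/2)).
        exists (Tp Om - PI/2). split; [lra|split].
        -- intros y Hy. rewrite S_INR in Et. apply P2; auto; lra.
        -- intros; apply H_der.
Qed.

Lemma right_piece c Om t : 0 < Om -> 0 <= t -> exists g d dl, 0 < dl /\
  (forall y, t <= y <= t + dl -> uu c Om y = g y /\ duu c Om y = d y) /\
  (forall y, derivable_pt_lim g y (d y)).
Proof.
  intros HO Ht. assert (HT := Tp_gt Om HO). assert (HP := PI2_pos).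
  destruct (Nf_loc Om t HO Ht) as [L1 L2]. set (n := Nf Om t) in *.
  destruct (Rlt_or_le t (INR n * Tp Om + PI/2)) as [Ha|Ha].
  - exists (G c ((-Om)^n) (INR n * Tp Om)), (dG c ((-Om)^n) (INR n * Tp Om)).
    exists (INR n * Tp Om + PI/2 - t). split; [lra|split].
    + intros y Hy. apply P1; auto; lra.
    + intros; apply G_der.
  - exists (Hf c Om ((-Om)^n) (INR n * Tp Om + PI/2)), (dHf c Om ((-Om)^n) (INR n * Tp Om + PI/2)).
    exists ((INR n + 1) * Tp Om - t). split; [lra|split].
    + intros y Hy. apply P2; auto; lra.
    + intros; apply H_der.
Qed.

Lemma uu_der c Om t : 0 < Om -> 0 <= t -> derivable_pt_lim (uu c Om) t (duu c Om t).
Proof.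
  intros HO Ht.
  destruct (left_piece c Om t HO Ht) as (g1 & d1 & l1 & Hl1 & E1 & D1).
  destruct (right_piece c Om t HO Ht) as (g2 & d2 & l2 & Hl2 & E2 & D2).
  apply glue2 with g1 d1 g2 d2 (Rmin l1 l2).
  - apply Rmin_glb_lt; auto.
  - intros y Hy. apply E1. assert (Rmin l1 l2 <= l1) by apply Rmin_l. lra.
  - intros y Hy. apply E2. assert (Rmin l1 l2 <= l2) by apply Rmin_r. lra.
  - auto.
  - auto.
Qed.

Lemma uu_ode c Om b C t : 0 < Om -> b = 1 + c^2/4 -> C = Om^2 - 1 -> 0 <= t ->
  sf Om t <> 0 -> sf Om t <> PI/2 ->
  exists ddu, derivable_pt_lim (duu c Om) t ddu /\
    ddu + c * duu c Om t + (b + aa C Om t) * uu c Om t = 0.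
Proof.
  intros HO Hb HC Ht N1 N2. assert (HT := Tp_gt Om HO). assert (HP := PI2_pos).
  destruct (Nf_loc Om t HO Ht) as [L1 L2]. unfold aa. unfold sf in *.
  set (n := Nf Om t) in *.
  destruct (Rle_dec (t - INR n * Tp Om) (PI/2)) as [Hs|Hs].
  - assert (Hs' : t - INR n * Tp Om < PI/2) by lra.
    assert (Hs0 : 0 < t - INR n * Tp Om) by lra.
    set (dl := Rmin (t - INR n * Tp Om) (PI/2 - (t - INR n * Tp Om))).
    assert (dl <= t - INR n * Tp Om) by apply Rmin_l.
    assert (dl <= PI/2 - (t - INR n * Tp Om)) by apply Rmin_r.
    assert (0 < dl) by (apply Rmin_glb_lt; lra).
    exists (- c * dG c ((-Om)^n) (INR n * Tp Om) t - (1 + c^2/4) * G c ((-Om)^n) (INR n * Tp Om) t).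
    destruct (P1 c Om n t HO) as [E1 E2]; [lra|]. rewrite E1, E2. split.
    + apply glue1 with (dG c ((-Om)^n) (INR n * Tp Om)) (dG c ((-Om)^n) (INR n * Tp Om)) dl; auto.
      * intros y Hy. apply P1; auto; lra.
      * intros y Hy. apply P1; auto; lra.
      * apply dG_der.
      * apply dG_der.
    + rewrite Hb. ring.
  - assert (Hs' : PI/2 < t - INR n * Tp Om) by lra.
    set (dl := Rmin (t - INR n * Tp Om - PI/2) ((INR n + 1) * Tp Om - t)).
    assert (dl <= t - INR n * Tp Om - PI/2) by apply Rmin_l.
    assert (dl <= (INR n + 1) * Tp Om - t) by apply Rmin_r.
    assert (0 < dl) by (apply Rmin_glb_lt; lra).
    set (K := (-Om)^n). set (t0 := INR n * Tp Om + PI/2).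
    exists (- c * dHf c Om K t0 t - (Om^2 + c^2/4) * Hf c Om K t0 t).
    destruct (P2 c Om n t HO) as [E1 E2]; [lra|]. rewrite E1, E2. split.
    + apply glue1 with (dHf c Om K t0) (dHf c Om K t0) dl; auto.
      * intros y Hy. apply P2; auto; lra.
      * intros y Hy. apply P2; auto; lra.
      * apply dH_der.
      * apply dH_der.
    + rewrite Hb, HC. fold K t0. ring.
Qed.

Lemma outer_mono (E F : R -> Prop) e : outer_le E e -> (forall x, F x -> E x) -> outer_le F e.
Proof.
  intros (lo & hi & H1 & H2 & H3) HFE. exists lo, hi. split; [|split]; auto.
Qed.

Lemma sum_first d N : sum_f_R0 (fun n => match n with 0%nat => d | _ => 0 end) N = d.
Proof. induction N; simpl; auto. rewrite IHN. ring. Qed.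

Lemma outer_interval (E : R -> Prop) lo0 hi0 e : lo0 <= hi0 -> hi0 - lo0 <= e ->
  (forall x, E x -> lo0 < x < hi0) -> outer_le E e.
Proof.
  intros Hl He HE.
  exists (fun n => match n with 0%nat => lo0 | _ => 0 end), (fun n => match n with 0%nat => hi0 | _ => 0 end).
  split; [|split].
  - intros [|n]; lra.
  - intros x Hx. exists 0%nat. apply HE; auto.
  - intros N. rewrite (sum_eq _ (fun n => match n with 0%nat => hi0 - lo0 | _ => 0 end)).
    + rewrite sum_first; auto.
    + intros [|i] _; simpl; ring.
Qed.

Lemma outer_empty (E : R -> Prop) e : 0 <= e -> (forall x, ~ E x) -> outer_le E e.
Proof.
  intros He HE. apply outer_interval with 0 0; try lra. intros x Hx. exfalso; eapply HE; eauto.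
Qed.

Lemma ev2 n : Nat.even (2*n) = true.
Proof. rewrite Nat.even_mul. reflexivity. Qed.
Lemma ev2s n : Nat.even (S (2*n)) = false.
Proof. rewrite Nat.even_succ, Nat.odd_mul. reflexivity. Qed.

Lemma null_two (p q : nat -> R) : null_set (fun t => exists n, t = p n \/ t = q n).
Proof.
  intros eps Heps.
  set (r := fun k => if Nat.even k then p (Nat.div2 k) else q (Nat.div2 k)).
  set (w := fun k => eps/4 * (1/2)^k).
  assert (Hw : forall k, 0 < w k).
  { intro k. unfold w. apply Rmult_lt_0_compat. lra. apply pow_lt. lra. }
  exists (fun k => r k - w k), (fun k => r k + w k). split; [|split].
  - intro n. specialize (Hw n). lra.
  - intros x [n [E|E]].
    + exists (2*n)%nat. unfold r. rewrite ev2, Nat.div2_double. specialize (Hw (2*n)%nat). lra.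
    + exists (S (2*n))%nat. unfold r. rewrite ev2s, Nat.div2_succ_double. specialize (Hw (S (2*n))%nat). lra.
  - intros N.
    rewrite (sum_eq _ (fun k => (1/2)^k * (eps/2))) by (intros; unfold w; field).
    rewrite <- scal_sum.
    assert (G1 := GP_finite (1/2) N).
    assert (0 < (1/2)^(N+1)) by (apply pow_lt; lra).
    assert (sum_f_R0 (fun n => (1/2)^n) N <= 2) by lra.
    change (pow (1/2)) with (fun n : nat => (1/2)^n). nra.
Qed.

Definition Lip (f : R -> R) a b L := forall s t, a <= s <= b -> a <= t <= b ->
  Rabs (f s - f t) <= L * Rabs (s - t).

Lemma lip_mvt g dg a b L : (forall y, derivable_pt_lim g y (dg y)) ->
  (forall y, a <= y <= b -> Rabs (dg y) <= L) -> Lip g a b L.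
Proof.
  intros D B s t Hs Ht.
  destruct (Rtotal_order s t) as [Hlt|[Heq|Hgt]].
  - destruct (MVT_cor2 g dg s t Hlt (fun y _ => D y)) as [z [Ez Hz]].
    rewrite <- Rabs_Ropp. replace (- (g s - g t)) with (g t - g s) by ring. rewrite Ez.
    rewrite Rabs_mult. rewrite <- Rabs_Ropp with (x := s - t). replace (- (s - t)) with (t - s) by ring.
    apply Rmult_le_compat_r. apply Rabs_pos. apply B; lra.
  - subst. replace (t - t) with 0 by ring. replace (g t - g t) with 0 by ring. rewrite Rabs_R0. lra.
  - destruct (MVT_cor2 g dg t s Hgt (fun y _ => D y)) as [z [Ez Hz]].
    rewrite Ez. rewrite Rabs_mult.
    apply Rmult_le_compat_r. apply Rabs_pos. apply B; lra.
Qed.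

Lemma lip_glue f a b c L : 0 <= L -> a <= b <= c -> Lip f a b L -> Lip f b c L -> Lip f a c L.
Proof.
  intros HL Hb L1 L2 s t Hs Ht.
  destruct (Rle_or_lt s b) as [H1|H1]; destruct (Rle_or_lt t b) as [H2|H2].
  - apply L1; lra.
  - assert (E1 := L1 s b ltac:(lra) ltac:(lra)). assert (E2 := L2 b t ltac:(lra) ltac:(lra)).
    assert (T1 := Rabs_triang (f s - f b) (f b - f t)).
    replace (f s - f b + (f b - f t)) with (f s - f t) in T1 by ring.
    rewrite (Rabs_left (s - t)) by lra. rewrite (Rabs_left1 (s - b)) in E1 by lra.
    rewrite (Rabs_left1 (b - t)) in E2 by lra. nra.
  - assert (E1 := L2 s b ltac:(lra) ltac:(lra)). assert (E2 := L1 b t ltac:(lra) ltac:(lra)).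
    assert (T1 := Rabs_triang (f s - f b) (f b - f t)).
    replace (f s - f b + (f b - f t)) with (f s - f t) in T1 by ring.
    rewrite (Rabs_right (s - t)) by lra. rewrite (Rabs_right (s - b)) in E1 by lra.
    rewrite (Rabs_right (b - t)) in E2 by lra. nra.
  - apply L2; lra.
Qed.

Lemma lip_mono f a b L L' : L <= L' -> Lip f a b L -> Lip f a b L'.
Proof.
  intros HL Hf s t Hs Ht. specialize (Hf s t Hs Ht).
  assert (0 <= Rabs (s - t)) by apply Rabs_pos. nra.
Qed.

Lemma lip_ext f g a b L : (forall y, a <= y <= b -> f y = g y) -> Lip g a b L -> Lip f a b L.
Proof. intros E Hg s t Hs Ht. rewrite (E s Hs), (E t Ht). auto. Qed.

Lemma bound3 E K X B : 0 < E <= 1 -> Rabs X <= B -> Rabs (E * K * X) <= Rabs K * B.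
Proof.
  intros HE HX. rewrite !Rabs_mult. rewrite (Rabs_right E) by lra.
  assert (0 <= Rabs K) by apply Rabs_pos. assert (0 <= Rabs X) by apply Rabs_pos. assert (E * Rabs X <= B) by nra. assert (0 <= Rabs K * (B - E * Rabs X)) by (apply Rmult_le_pos; lra). nra.
Qed.

Lemma exp_le1 c y : 0 <= c -> 0 <= y -> 0 < exp (-(c/2)*y) <= 1.
Proof.
  intros Hc Hy. split. apply exp_pos. rewrite <- exp_0. destruct (Rle_lt_or_eq_dec (-(c/2)*y) 0) as [h|h]; [nra| left; apply exp_increasing; auto | rewrite h; lra].
Qed.

Lemma absK Om n : 0 <= Om -> Rabs ((-Om)^n) = Om^n.
Proof. intros. rewrite <- RPow_abs, Rabs_Ropp, Rabs_right by lra. auto. Qed.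

Definition Kc c Om := c*(Om + c) + Om^2 + c^2.

Lemma abs_lin a b x y : 0 <= b -> Rabs x <= 1 -> Rabs y <= 1 -> Rabs (a * x - b * y) <= Rabs a + b.
Proof.
  intros Hb Hx Hy. unfold Rminus. eapply Rle_trans. apply Rabs_triang.
  rewrite Rabs_Ropp, !Rabs_mult, (Rabs_right b) by lra.
  assert (0 <= Rabs a) by apply Rabs_pos. nra.
Qed.

Lemma ddG_bound c Om n t0 y : 0 <= c -> 1 <= Om -> 0 <= y ->
  Rabs (- c * dG c ((-Om)^n) t0 y - (1 + c^2/4) * G c ((-Om)^n) t0 y) <= Om^n * Kc c Om.
Proof.
  intros Hc HO Hy. assert (HE := exp_le1 c y Hc Hy).
  assert (B1 : Rabs (G c ((-Om)^n) t0 y) <= Om^n * 1).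
  { unfold G. rewrite <- (absK Om n) by lra. apply bound3; auto. apply Rabs_le, SIN_bound. }
  assert (B2 : Rabs (dG c ((-Om)^n) t0 y) <= Om^n * (1 + c/2)).
  { unfold dG. rewrite <- (absK Om n) by lra. apply bound3; auto.
    replace (cos (y - t0)) with (1 * cos (y - t0)) by ring.
    replace (1 + c/2) with (Rabs 1 + c/2) by (rewrite Rabs_R1; ring).
    apply abs_lin; try lra; apply Rabs_le; [apply COS_bound|apply SIN_bound]. }
  assert (0 < Om^n) by (apply pow_lt; lra).
  replace (- c * dG c ((-Om)^n) t0 y - (1 + c^2/4) * G c ((-Om)^n) t0 y)
    with (-(c * dG c ((-Om)^n) t0 y + (1 + c^2/4) * G c ((-Om)^n) t0 y)) by ring.
  rewrite Rabs_Ropp. eapply Rle_trans. apply Rabs_triang. rewrite !Rabs_mult.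
  rewrite (Rabs_right c) by lra. rewrite (Rabs_right (1 + c^2/4)) by nra.
  unfold Kc. set (P := Om^n) in *.
  assert (c * Rabs (dG c ((-Om)^n) t0 y) <= c * (P * (1 + c/2))) by (apply Rmult_le_compat_l; lra).
  assert ((1 + c^2/4) * Rabs (G c ((-Om)^n) t0 y) <= (1 + c^2/4) * (P * 1)) by (apply Rmult_le_compat_l; nra).
  assert (0 <= P * (c*(Om-1) + c^2/4 + (Om^2 - 1))) by (apply Rmult_le_pos; nra).
  nra.
Qed.

Lemma ddH_bound c Om n t0 y : 0 <= c -> 1 <= Om -> 0 <= y ->
  Rabs (- c * dHf c Om ((-Om)^n) t0 y - (Om^2 + c^2/4) * Hf c Om ((-Om)^n) t0 y) <= Om^n * Kc c Om.
Proof.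
  intros Hc HO Hy. assert (HE := exp_le1 c y Hc Hy).
  assert (B1 : Rabs (Hf c Om ((-Om)^n) t0 y) <= Om^n * 1).
  { unfold Hf. rewrite <- (absK Om n) by lra. apply bound3; auto. apply Rabs_le, COS_bound. }
  assert (B2 : Rabs (dHf c Om ((-Om)^n) t0 y) <= Om^n * (Om + c/2)).
  { unfold dHf. rewrite <- (absK Om n) by lra. apply bound3; auto.
    replace (Om + c/2) with (Rabs (-Om) + c/2) by (rewrite Rabs_Ropp, Rabs_right by lra; ring).
    apply abs_lin; try lra; apply Rabs_le; [apply SIN_bound|apply COS_bound]. }
  assert (0 < Om^n) by (apply pow_lt; lra).
  replace (- c * dHf c Om ((-Om)^n) t0 y - (Om^2 + c^2/4) * Hf c Om ((-Om)^n) t0 y)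
    with (-(c * dHf c Om ((-Om)^n) t0 y + (Om^2 + c^2/4) * Hf c Om ((-Om)^n) t0 y)) by ring.
  rewrite Rabs_Ropp. eapply Rle_trans. apply Rabs_triang. rewrite !Rabs_mult.
  rewrite (Rabs_right c) by lra. rewrite (Rabs_right (Om^2 + c^2/4)) by nra.
  unfold Kc. set (P := Om^n) in *.
  assert (c * Rabs (dHf c Om ((-Om)^n) t0 y) <= c * (P * (Om + c/2))) by (apply Rmult_le_compat_l; lra).
  assert ((Om^2 + c^2/4) * Rabs (Hf c Om ((-Om)^n) t0 y) <= (Om^2 + c^2/4) * (P * 1)) by (apply Rmult_le_compat_l; nra).
  assert (0 <= P * (c^2/2 + c^2 * 3/4)) by (apply Rmult_le_pos; nra).
  nra.
Qed.

Lemma Kc_pos c Om : 0 <= c -> 1 <= Om -> 0 <= Kc c Om.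
Proof. intros. unfold Kc. nra. Qed.

Lemma lip_P1 c Om n : 0 <= c -> 1 <= Om ->
  Lip (duu c Om) (INR n * Tp Om) (INR n * Tp Om + PI/2) (Om^n * Kc c Om).
Proof.
  intros Hc HO. assert (HT := Tp_gt Om ltac:(lra)). assert (HP := PI2_pos).
  assert (0 <= INR n) by apply pos_INR.
  apply lip_ext with (dG c ((-Om)^n) (INR n * Tp Om)).
  - intros y Hy. apply P1; auto; lra.
  - apply lip_mvt with (fun y => - c * dG c ((-Om)^n) (INR n * Tp Om) y - (1 + c^2/4) * G c ((-Om)^n) (INR n * Tp Om) y).
    + intros; apply dG_der.
    + intros y Hy. apply ddG_bound; auto. nra.
Qed.

Lemma lip_P2 c Om n : 0 <= c -> 1 <= Om ->
  Lip (duu c Om) (INR n * Tp Om + PI/2) ((INR n + 1) * Tp Om) (Om^n * Kc c Om).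
Proof.
  intros Hc HO. assert (HT := Tp_gt Om ltac:(lra)). assert (HP := PI2_pos).
  assert (0 <= INR n) by apply pos_INR.
  apply lip_ext with (dHf c Om ((-Om)^n) (INR n * Tp Om + PI/2)).
  - intros y Hy. apply P2; auto; lra.
  - apply lip_mvt with (fun y => - c * dHf c Om ((-Om)^n) (INR n * Tp Om + PI/2) y - (Om^2 + c^2/4) * Hf c Om ((-Om)^n) (INR n * Tp Om + PI/2) y).
    + intros; apply dH_der.
    + intros y Hy. apply ddH_bound; auto. nra.
Qed.

Lemma lip_all c Om N : 0 <= c -> 1 <= Om -> Lip (duu c Om) 0 (INR N * Tp Om) (Om^N * Kc c Om).
Proof.
  intros Hc HO. assert (HT := Tp_gt Om ltac:(lra)). assert (HP := PI2_pos).
  assert (HK := Kc_pos c Om Hc HO).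
  induction N.
  - intros s t Hs Ht. simpl in Hs, Ht. replace s with 0 by lra. replace t with 0 by lra.
    replace (duu c Om 0 - duu c Om 0) with 0 by ring. rewrite Rabs_R0. replace (0-0) with 0 by ring.
    rewrite Rabs_R0. lra.
  - assert (0 <= INR N) by apply pos_INR.
    assert (HM : Om^N * Kc c Om <= Om^(S N) * Kc c Om).
    { simpl. assert (0 < Om^N) by (apply pow_lt; lra). assert (0 <= Om^N * (Om - 1)) by (apply Rmult_le_pos; lra). assert (0 <= Om^N * (Om - 1) * Kc c Om) by (apply Rmult_le_pos; lra). nra. }
    assert (0 <= Om^(S N) * Kc c Om) by (apply Rmult_le_pos; auto; apply pow_le; lra).
    rewrite S_INR. apply lip_glue with (INR N * Tp Om + PI/2); auto.
    + nra.
    + apply lip_glue with (INR N * Tp Om); auto.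
      * nra.
      * apply lip_mono with (Om^N * Kc c Om); auto.
      * apply lip_mono with (Om^N * Kc c Om); auto. apply lip_P1; auto.
    + apply lip_mono with (Om^N * Kc c Om); auto. apply lip_P2; auto.
Qed.

Lemma aa_vals C Om t : aa C Om t = 0 \/ aa C Om t = C.
Proof. unfold aa. destruct (Rle_dec _ _); auto. Qed.

Lemma meas_aa C Om : 0 < Om -> 0 < C -> measurable_on_Rplus (aa C Om).
Proof.
  intros HO HC r eps Heps. assert (HT := Tp_gt Om HO). assert (HP := PI2_pos).
  destruct (Rlt_or_le r 0) as [Hr|Hr].
  - exists (fun x => - (eps/2) < x). split; [|split].
    + intros x Hx. exists (x + eps/2). split; [lra|]. intros y Hy. apply Rabs_def2 in Hy. lra.
    + intros x [Hx _]. lra.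
    + apply outer_interval with (-(eps/2)) 0; try lra.
      intros x [Hx1 Hx2]. split; auto. destruct (Rlt_or_le x 0); auto. exfalso. apply Hx2.
      split; auto. destruct (aa_vals C Om x) as [E|E]; rewrite E; lra.
  - destruct (Rlt_or_le r C) as [Hr2|Hr2].
    + exists (fun t => 0 <= t /\ r < aa C Om t). split; [|split].
      * intros x [Hx1 Hx2]. 
        assert (Hs : ~ sf Om x <= PI/2).
        { intro Hs. unfold aa in Hx2. destruct (Rle_dec (sf Om x) (PI/2)); [lra|tauto]. }
        unfold sf in Hs. destruct (Nf_loc Om x HO Hx1) as [L1 L2]. set (n := Nf Om x) in *.
        assert (0 <= INR n) by apply pos_INR.
        exists (Rmin (x - INR n * Tp Om - PI/2) ((INR n + 1) * Tp Om - x)). split.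
        { apply Rmin_glb_lt; lra. }
        intros y Hy. apply Rabs_def2 in Hy.
        assert (Rmin (x - INR n * Tp Om - PI/2) ((INR n + 1) * Tp Om - x) <= x - INR n * Tp Om - PI/2) by apply Rmin_l.
        assert (Rmin (x - INR n * Tp Om - PI/2) ((INR n + 1) * Tp Om - x) <= (INR n + 1) * Tp Om - x) by apply Rmin_r.
        assert (HN : Nf Om y = n) by (apply Nf_piece; auto; lra).
        split; [nra|]. unfold aa, sf. rewrite HN. destruct (Rle_dec _ _); lra.
      * auto.
      * apply outer_empty; [lra|]. intros x [H1 H2]. auto.
    + exists (fun _ => False). split; [|split].
      * intros x [].
      * intros x [_ Hx]. destruct (aa_vals C Om x) as [E|E]; rewrite E in Hx; lra.
      * apply outer_empty; [lra|]. intros x [[] _].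
Qed.

Lemma exp_n n x : exp (INR n * x) = exp x ^ n.
Proof.
  induction n. simpl. rewrite Rmult_0_l. apply exp_0.
  rewrite S_INR. replace ((INR n + 1) * x) with (INR n * x + x) by ring.
  rewrite exp_plus, IHn. simpl. ring.
Qed.

Lemma bernoulli r n : 1 <= r -> 1 + INR n * (r - 1) <= r ^ n.
Proof.
  intros Hr. induction n. simpl. lra.
  rewrite S_INR. simpl. assert (0 <= INR n) by apply pos_INR.
  assert (0 <= INR n * (r-1)*(r-1)) by (apply Rmult_le_pos; [apply Rmult_le_pos|]; lra). nra.
Qed.

Lemma unbounded c Om : 0 < Om -> 0 <= c -> 1 < Om * exp (-(c/2) * Tp Om) ->
  ~ (exists M, forall t, 0 <= t -> Rabs (uu c Om t) <= M).
Proof.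
  intros HO Hc Hr [M HM]. assert (HT := Tp_gt Om HO). assert (HP := PI2_pos).
  set (rho := Om * exp (-(c/2) * Tp Om)) in *.
  set (A := exp (-(c/2) * (PI/2))). assert (HA : 0 < A) by apply exp_pos.
  assert (Hval : forall n, Rabs (uu c Om (INR n * Tp Om + PI/2)) = A * rho ^ n).
  { intro n. destruct (P1 c Om n (INR n * Tp Om + PI/2) HO) as [E _].
    { assert (0 <= INR n) by apply pos_INR. lra. }
    rewrite E. unfold G. replace (INR n * Tp Om + PI / 2 - INR n * Tp Om) with (PI/2) by ring.
    rewrite sin_PI2, Rmult_1_r.
    replace (- (c / 2) * (INR n * Tp Om + PI / 2)) with (INR n * (-(c/2) * Tp Om) + (-(c/2) * (PI/2))) by ring.
    rewrite exp_plus, exp_n. rewrite Rabs_mult, absK by lra.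
    rewrite Rabs_right. 2: { apply Rle_ge, Rmult_le_pos. apply pow_le. left; apply exp_pos. left; apply exp_pos. }
    unfold rho, A. rewrite Rpow_mult_distr. ring. }
  destruct (INR_archimed (A * (rho - 1)) M) as [n Hn]. { apply Rmult_lt_0_compat; lra. }
  assert (B := bernoulli rho n ltac:(lra)).
  assert (Hm := HM (INR n * Tp Om + PI/2)). rewrite Hval in Hm.
  assert (0 <= INR n) by apply pos_INR.
  assert (0 <= INR n) by apply pos_INR.
  assert (A * (1 + INR n * (rho - 1)) <= A * rho ^ n) by (apply Rmult_le_compat_l; lra).
  assert (0 <= INR n * Tp Om + PI / 2) by nra.
  specialize (Hm H2). nra.
Qed.

Theorem theorem2p2 :
  forall eps : R, 0 < eps ->
  exists (b c C : R) (a : R -> R),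
    1 < b /\ 0 < c /\ c < 2 * sqrt b /\ 0 < C /\ C < (PI + eps) * c * sqrt b /\
    measurable_on_Rplus a /\
    ae_Rplus (fun t => 0 <= a t <= C) /\
    exists u du : R -> R,
      W2inf_loc u du /\
      ae_Rplus (fun t => exists ddu, derivable_pt_lim du t ddu /\
                  ddu + c * du t + (b + a t) * u t = 0) /\
      ~ (exists M, forall t, 0 <= t -> Rabs (u t) <= M).
Proof.
  intros eps Heps.
  assert (HP1 := PI2_1). assert (HP4 := PI_4).
  set (d := eps / (8 + eps)).
  assert (Hd : d * (8 + eps) = eps) by (unfold d; field; lra).
  assert (Hd0 : 0 < d) by (unfold d; apply Rdiv_lt_0_compat; lra).
  assert (Hd1 : d < 1) by nra.
  assert (Hd8 : 8 * d < eps) by nra.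
  set (Om := 1 + d).
  set (c := 2 * d / (PI * (1 + d))).
  assert (Hc : c * (PI * (1 + d)) = 2 * d) by (unfold c; field; lra).
  assert (Hc0 : 0 < c) by (unfold c; apply Rdiv_lt_0_compat; nra).
  assert (Hc1 : c < 1). { assert (2 * d < PI * (1 + d)) by nra. destruct (Rlt_or_le c 1); auto. assert (0 <= (c - 1) * (PI * (1 + d))) by (apply Rmult_le_pos; nra). nra. }
  set (b := 1 + c^2/4). set (C := Om^2 - 1).
  assert (HO : 0 < Om) by (unfold Om; lra).
  assert (HO1 : 1 <= Om) by (unfold Om; lra).
  assert (Hb : 1 < b) by (unfold b; nra).
  assert (Hsb : 1 < sqrt b) by (rewrite <- sqrt_1; apply sqrt_lt_1; lra).
  exists b, c, C, (aa C Om).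
  assert (HC : 0 < C) by (unfold C, Om; nra).
  split; [auto|]. split; [auto|]. split; [lra|]. split; [auto|].
  split.
  { assert (C < (PI + eps) * c).
    { assert (E : C = 2*d + d^2) by (unfold C, Om; ring). rewrite E.
      apply Rmult_lt_reg_r with (PI * (1 + d)). nra.
      replace ((PI + eps) * c * (PI * (1 + d))) with ((PI + eps) * (c * (PI * (1 + d)))) by ring.
      rewrite Hc. assert (PI * (3*d + d^2) < 2 * eps).
      { assert (PI * (3*d+d^2) <= 4 * (3*d + d^2)) by (apply Rmult_le_compat_r; nra). nra. }
      nra. }
    assert (0 < (PI + eps) * c) by nra. nra. }
  split; [apply meas_aa; auto|].
  split.
  { intros e He. apply outer_empty; [lra|]. intros x [_ Hx]. apply Hx.
    destruct (aa_vals C Om x) as [E|E]; rewrite E; lra. }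
  exists (uu c Om), (duu c Om). split; [split|split].
  - intros t Ht. apply uu_der; auto.
  - intros T' HT'. exists (Om^(S (Nf Om T')) * Kc c Om). intros s t Hs Ht.
    destruct (Nf_loc Om T' HO HT') as [_ L2].
    apply (lip_all c Om (S (Nf Om T'))); try lra; rewrite S_INR; lra.
  - intros e He. eapply outer_mono. apply (null_two (fun n => INR n * Tp Om) (fun n => INR n * Tp Om + PI/2) e He).
    intros x [Hx Hn]. exists (Nf Om x). unfold sf in *.
    destruct (Req_dec (sf Om x) 0) as [E|E].
    + left. unfold sf in E. lra.
    + destruct (Req_dec (sf Om x) (PI/2)) as [E2|E2].
      * right. unfold sf in E2. lra.
      * exfalso. apply Hn. apply uu_ode; auto.
  - apply unbounded; try lra.
    set (x := c / 2 * Tp Om).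
    assert (Hx : x * (2 * (1 + d)^2) = d * (2 + d)).
    { unfold x, Tp, Om. unfold c. field. split; lra. }
    assert (Hx0 : 0 < x) by (unfold x; assert (HT := Tp_gt Om HO); assert (HP := PI2_pos); nra).
    replace (- (c / 2) * Tp Om) with (- x) by (unfold x; ring).
    assert (E1 := exp_ineq1 (- x) ltac:(lra)).
    assert (Om * (1 - x) >= 1).
    { unfold Om. assert (0 <= d^2) by nra. nra. }
    unfold Om in *. nra.
Qed.
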